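(* Let $J\subseteq S$. The poset $\mathrm{Weak}(\mathfrak{S}_n^J(231))$, i.e. the set $\mathfrak{S}_n^J(231)$ ordered by $u\le_S v\iff\mathrm{inv}(u)\subseteq\mathrm{inv}(v)$, is a lattice.
   Context: $\mathfrak{S}_n$ is the symmetric group on $[n]$, $s_i=(i,i+1)$, $S=\{s_1,\dots,s_{n-1}\}$, one-line notation $w=w_1\cdots w_n$, $\mathrm{inv}(w)=\{(i,j):i<j,\ w_i>w_j\}$. For $J\subseteq S$, $\mathfrak{S}_n^J$ is the set of $w$ with $w_i<w_{i+1}$ whenever $s_i\in J$. Writing $J=S\setminus\{s_{j_1},\dots,s_{j_r}\}$ with $j_1<\dots<j_r$, the $J$-regions are $\{1,\dots,j_1\},\{j_1+1,\dots,j_2\},\dots,\{j_r+1,\dots,n\}$. $\mathfrak{S}_n^J(231)$ is the set of $w\in\mathfrak{S}_n^J$ admitting no indices $i<j<k$ in pairwise different $J$-regions with $w_k<w_i<w_j$ and $w_i=w_k+1$. *)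

(* Defs.v *)
From mathcomp Require Import all_boot all_fingroup.
Set Implicit Arguments. Unset Strict Implicit. Unset Printing Implicit Defensive.

(* Positions and values are 0-indexed: w : 'S_n, position i : 'I_n,
   value val (w i) in {0,..,n-1}.  The simple transposition s_{k+1}
   (1-indexed) is encoded by k : 'I_n.-1, acting on positions k, k+1.
   A subset J of S is thus a {set 'I_n.-1}. *)

Definition inv_set n (w : 'S_n) : {set 'I_n * 'I_n} :=
  [set p : 'I_n * 'I_n | (p.1 < p.2) && (w p.2 < w p.1)].

Definition weak_le n (u v : 'S_n) : Prop := inv_set u \subset inv_set v.

Definition in_quotient n (J : {set 'I_n.-1}) (w : 'S_n) : Prop :=
  forall (k : 'I_n.-1) (i j : 'I_n),
    k \in J -> val i = val k -> val j = (val k).+1 -> w i < w j.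

(* index of the J-region containing position p: the number of
   generators s_{k+1} not in J with k < p (0-indexed) *)
Definition region n (J : {set 'I_n.-1}) (p : 'I_n) : nat :=
  #|[set k : 'I_n.-1 | (k \notin J) && (val k < val p)]|.

Definition avoids231 n (J : {set 'I_n.-1}) (w : 'S_n) : Prop :=
  ~ exists i j k : 'I_n,
      [&& i < j, j < k,
          region J i != region J j, region J j != region J k,
          region J i != region J k,
          w k < w i, w i < w j & val (w i) == (val (w k)).+1].

Definition S231 n (J : {set 'I_n.-1}) (w : 'S_n) : Prop :=
  in_quotient J w /\ avoids231 J w.

Definition is_lattice (T : Type) (P : T -> Prop) (le : T -> T -> Prop) : Prop :=
  forall x y, P x -> P y ->
    (exists z, [/\ P z, le x z, le y z &
                 forall u, P u -> le x u -> le y u -> le z u]) /\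
    (exists z, [/\ P z, le z x, le z y &
                 forall u, P u -> le u x -> le u y -> le u z]).

(* Main.v *)
Require Import Defs.
From mathcomp Require Import all_boot all_fingroup zify.
From Stdlib Require Import Relations ClassicalEpsilon.
Set Implicit Arguments. Unset Strict Implicit. Unset Printing Implicit Defensive.

Section Join.
Variable n : nat.
Implicit Types u v w : 'S_n.

Lemma weak_leP u v : weak_le u v <-> forall i j : 'I_n, i < j -> u j < u i -> v j < v i.
Proof.
split.
  move=> H i j ij uji.
  have: (i, j) \in inv_set u by rewrite inE /= ij uji.
  by move/(subsetP H); rewrite inE /= => /andP[].
move=> H; apply/subsetP => [[i j]]; rewrite !inE /= => /andP[a b].
by rewrite a /=; apply: H.
Qed.

Lemma weak_le_trans u v w : weak_le u v -> weak_le v w -> weak_le u w.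
Proof. exact: subset_trans. Qed.

Lemma perm_neq_lt w (i j : 'I_n) : i != j -> (w i < w j) || (w j < w i).
Proof.
move=> ij; rewrite -neq_ltn; apply: contra ij => /eqP/val_inj /perm_inj ->.
by [].
Qed.

Variables u v : 'S_n.

Definition Rel (i j : 'I_n) : Prop := i < j /\ (u j < u i \/ v j < v i).
Definition TC := clos_trans 'I_n Rel.

Lemma TC_trans (x y z : 'I_n) : TC x y -> TC y z -> TC x z.
Proof. move=> h1 h2; exact: t_trans h1 h2. Qed.

Lemma TC_lt (i j : 'I_n) : TC i j -> i < j.
Proof. elim=> [x y [] //|x y z _ h1 _ h2]; exact: ltn_trans h1 h2. Qed.

Lemma Rel_cotrans (a b c : 'I_n) : Rel a c -> a < b -> b < c -> Rel a b \/ Rel b c.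
Proof.
move=> [ac H] ab bc.
have nab : a != b by rewrite neq_ltn ab.
have nbc : b != c by rewrite neq_ltn bc.
case: H => H.
  case/orP: (perm_neq_lt u nab) => h.
    by right; split => //; left; apply: ltn_trans H h.
  by left; split => //; left.
case/orP: (perm_neq_lt v nab) => h.
  by right; split => //; right; apply: ltn_trans H h.
by left; split => //; right.
Qed.

Lemma TC_cotrans (a c : 'I_n) : TC a c -> forall b : 'I_n, a < b -> b < c -> TC a b \/ TC b c.
Proof.
elim=> [x y R|x y z Txy IH1 Tyz IH2] b xb bc.
  by case: (Rel_cotrans R xb bc) => h; [left|right]; apply: t_step.
have xy := TC_lt Txy; have yz := TC_lt Tyz.
case: (ltngtP b y) => [by'|yb|/val_inj ->]; last by left.
  case: (IH1 b xb by') => h; first by left.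
  by right; apply: t_trans h Tyz.
case: (IH2 b yb bc) => h; last by right.
by left; apply: t_trans Txy h.
Qed.

Lemma TC_le w : weak_le u w -> weak_le v w -> forall i j, TC i j -> w j < w i.
Proof.
move=> /weak_leP Hu /weak_leP Hv i j; elim=> [x y [xy [h|h]]|x y z _ h1 _ h2].
- exact: Hu.
- exact: Hv.
exact: ltn_trans h2 h1.
Qed.

Definition Tb i j : bool := if excluded_middle_informative (TC i j) then true else false.
Lemma TbP i j : reflect (TC i j) (Tb i j).
Proof. by rewrite /Tb; case: excluded_middle_informative => H; constructor. Qed.

Lemma TbI i j : TC i j -> Tb i j. Proof. by move/TbP. Qed.
Lemma TbE i j : Tb i j -> TC i j. Proof. by move/TbP. Qed.

Definition prec (i j : 'I_n) : bool := ((i < j) && ~~ Tb i j) || ((j < i) && Tb j i).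

Lemma prec_irr i : prec i i = false.
Proof. by rewrite /prec ltnn. Qed.

Lemma prec_total i j : i != j -> prec i j || prec j i.
Proof.
rewrite neq_ltn /prec => /orP[] h.
  have h' : (j < i) = false by rewrite ltnNge ltnW.
  by rewrite h h' /=; case: (Tb i j).
have h' : (i < j) = false by rewrite ltnNge ltnW.
by rewrite h h' /=; case: (Tb j i).
Qed.


Lemma prec_trans (a b c : 'I_n) : prec a b -> prec b c -> prec a c.
Proof.
rewrite /prec.
case/orP => [/andP[ab nab]|/andP[ba /TbE tba]];
case/orP => [/andP[bc nbc]|/andP[cb /TbE tcb]].
- have ac := ltn_trans ab bc; rewrite ac /=; apply/orP; left; apply/negP => /TbE h.
  case: (TC_cotrans h ab bc) => /TbI h2; [by rewrite h2 in nab|by rewrite h2 in nbc].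
- case: (ltngtP a c) => [ac|ca|/val_inj eac] /=; rewrite ?orbF.
  + apply/negP => /TbE h; suff /TbI: TC a b by rewrite (negbTE nab).
    exact: t_trans h tcb.
  + apply/TbP; case: (TC_cotrans tcb ca ab) => // /TbI h; by rewrite h in nab.
  + by subst c; rewrite (TbI tcb) in nab.
- case: (ltngtP a c) => [ac|ca|/val_inj eac] /=; rewrite ?orbF.
  + by apply/negP => /TbE h; rewrite (TbI (TC_trans tba h)) in nbc.
  + apply/TbP; case: (TC_cotrans tba bc ca) => // /TbI h; by rewrite h in nbc.
  + by subst c; rewrite (TbI tba) in nbc.
- have ca := ltn_trans cb ba; rewrite ca ltnNge ltnW //=; apply/TbP.
  exact: t_trans tcb tba.
Qed.

Lemma rank_lt (i : 'I_n) : #|[set x | prec x i]| < n.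
Proof.
have H : #|[set x | prec x i]| < #|[set: 'I_n]|.
  apply: proper_card; apply/properP; split; first exact: subsetT.
  by exists i; rewrite ?inE ?prec_irr.
by rewrite cardsT card_ord in H.
Qed.

Definition rk (i : 'I_n) : 'I_n := Ordinal (rank_lt i).

Lemma rk_mono (i j : 'I_n) : prec i j -> rk i < rk j.
Proof.
move=> pij; rewrite /=; apply: proper_card; apply/properP; split.
  by apply/subsetP => x; rewrite !inE => pxi; apply: prec_trans pxi pij.
by exists i; rewrite !inE ?prec_irr.
Qed.

Lemma rk_inj : injective rk.
Proof.
move=> i j e; apply/eqP; apply/negPn/negP => /prec_total /orP[] /rk_mono.
  by rewrite e ltnn.
by rewrite e ltnn.
Qed.

Definition zj : 'S_n := perm rk_inj.

Lemma zj_lt (i j : 'I_n) : (zj i < zj j) = prec i j.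
Proof.
rewrite !permE; case pij: (prec i j); first exact: rk_mono.
case: (eqVneq i j) => [->|nij]; first by rewrite ltnn.
move: (prec_total nij); rewrite pij /= => /rk_mono h.
by apply/negbTE; rewrite -leqNgt ltnW.
Qed.

Lemma zj_inv (i j : 'I_n) : i < j -> (zj j < zj i) <-> TC i j.
Proof.
move=> ij; rewrite zj_lt /prec ij /= ltnNge ltnW //=.
by split; [move/TbE|move/TbI].
Qed.
End Join.

Definition decomp n (u v z : 'S_n) := forall i k : 'I_n, i < k -> z k < z i ->
  (u k < u i \/ v k < v i) \/ exists p : 'I_n, [/\ i < p, p < k, z p < z i & z k < z p].

Lemma TC_inv n (u v : 'S_n) (i k : 'I_n) : TC u v i k -> Rel u v i k \/ exists y, TC u v i y /\ TC u v y k.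
Proof. intros H; destruct H as [y H|y z h1 h2]; [by left|right; by exists y]. Qed.

Lemma join_ex n (u v : 'S_n) : exists z : 'S_n, [/\ weak_le u z, weak_le v z,
  (forall w, weak_le u w -> weak_le v w -> weak_le z w) & decomp u v z].
Proof.
exists (zj u v); split.
- apply/weak_leP => i j ij h; apply/(zj_inv _ _ ij); apply: t_step; split=> //; by left.
- apply/weak_leP => i j ij h; apply/(zj_inv _ _ ij); apply: t_step; split=> //; by right.
- move=> w hu hv; apply/weak_leP => i j ij /(zj_inv _ _ ij); exact: TC_le.
move=> i k ik /(zj_inv _ _ ik) h; case: (TC_inv h) => [[_ H]|[y [h1 h2]]]; first by left.
right; exists y; split.
- exact: TC_lt h1.
- exact: TC_lt h2.
- by apply/(zj_inv _ _ (TC_lt h1)).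
- by apply/(zj_inv _ _ (TC_lt h2)).
Qed.

Lemma region_mono n (J : {set 'I_n.-1}) (a b : 'I_n) : a <= b -> region J a <= region J b.
Proof.
move=> ab; apply: subset_leq_card; apply/subsetP => x; rewrite !inE => /andP[-> h] /=.
exact: leq_trans h ab.
Qed.

Lemma quot_join n (J : {set 'I_n.-1}) (u v z : 'S_n) :
  in_quotient J u -> in_quotient J v -> decomp u v z -> in_quotient J z.
Proof.
move=> qu qv D k i j kJ ei ej.
have ij : i < j by rewrite ei ej.
have nij : i != j by rewrite neq_ltn ij.
case/orP: (perm_neq_lt z nij) => // h.
case: (D i j ij h) => [[h1|h1]|[p [ip pj _ _]]].
- by have := qu k i j kJ ei ej; rewrite ltnNge ltnW.
- by have := qv k i j kJ ei ej; rewrite ltnNge ltnW.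
- have h1 : val i < val p := ip; have h2 : val p < val j := pj; lia.
Qed.

Lemma cross (P : nat -> bool) d : P 0 -> ~~ P d -> exists t, [/\ t < d, P t & ~~ P t.+1].
Proof.
elim: d => [->//|d IH] P0 Pd.
case Pd': (P d); first by exists d; split.
by case: (IH P0 (negbT Pd')) => t [td Pt Pt1]; exists t; split => //; apply: ltnW.
Qed.

Lemma core n (J : {set 'I_n.-1}) (w z : 'S_n) (i j k : 'I_n) :
  weak_le w z -> avoids231 J w -> i < j -> j < k ->
  region J i != region J j -> region J j != region J k ->
  w k < w i -> z i < z j -> nat_of_ord (z i) = (z k).+1 -> False.
Proof.
move=> /weak_leP wz aw ij jk rij rjk wki zij zik.
have ik := ltn_trans ij jk.
have wij : w i < w j.
  have nij : i != j by rewrite neq_ltn ij.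
  case/orP: (perm_neq_lt w nij) => // h.
  have := wz _ _ ij h; lia.
have nop : forall p : 'I_n, i < p -> p < k -> w k < w p -> w p < w i -> False.
  move=> p ip pk h1 h2; have := wz _ _ pk h1; have := wz _ _ ip h2; lia.
set a := nat_of_ord (w k); set d := w i - a.
pose vo t : 'I_n := insubd k (a + t).
have voE : forall t, t <= d -> nat_of_ord (vo t) = a + t.
  move=> t td; rewrite /vo insubdK //; have := ltn_ord (w i); rewrite /d in td; lia.
pose pos t := nat_of_ord ((w^-1)%g (vo t)).
have wpos : forall t, t <= d -> nat_of_ord (w ((w^-1)%g (vo t))) = a + t.
  by move=> t td; rewrite permKV voE.
have P0 : j < pos 0.
  have e : (w^-1)%g (vo 0) = k.
    apply: (@perm_inj _ w); rewrite permKV; apply: ord_inj; by rewrite voE // addn0.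
  by rewrite /pos e.
have Pd : ~~ (j < pos d).
  have e : (w^-1)%g (vo d) = i.
    apply: (@perm_inj _ w); rewrite permKV; apply: ord_inj; rewrite voE // /d; lia.
  by rewrite /pos e -leqNgt ltnW.
case: (@cross (fun t => j < pos t) d P0 Pd) => t [td Pt Pt1].
rewrite /pos in Pt Pt1.
set x := (w^-1)%g (vo t.+1) in Pt1; set y := (w^-1)%g (vo t) in Pt.
have wx : nat_of_ord (w x) = a + t.+1 := wpos _ td.
have wy : nat_of_ord (w y) = a + t := wpos _ (ltnW td).
have xj : x < j.
  have nxj : nat_of_ord x != nat_of_ord j.
    apply/eqP => e; have e' : x = j := ord_inj e; rewrite e' in wx; rewrite /d in td; lia.
  lia.
have xi : x <= i.
  case: (leqP x i) => // ix; exfalso.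
  case: (eqVneq (nat_of_ord (w x)) (nat_of_ord (w i))) => e.
    by move: ix; rewrite (perm_inj (ord_inj e)) ltnn.
  apply: (nop x ix (ltn_trans xj jk)); rewrite /d in td; lia.
have ky : k <= y.
  case: (leqP k y) => // yk; exfalso.
  case: (eqVneq (nat_of_ord (w y)) (nat_of_ord (w k))) => e.
    by move: yk; rewrite (perm_inj (ord_inj e)) ltnn.
  apply: (nop y (ltn_trans ij Pt) yk); rewrite /d in td; lia.
have r1 := region_mono J xi; have r2 := region_mono J (ltnW ij).
have r3 := region_mono J (ltnW jk); have r4 := region_mono J ky.
apply: aw; exists x, j, y; rewrite /=.
repeat (apply/andP; split); lia.
Qed.

Lemma P_join n (J : {set 'I_n.-1}) (x y z : 'S_n) :
  S231 J x -> S231 J y -> weak_le x z -> weak_le y z -> decomp x y z -> S231 J z.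
Proof.
move=> [qx ax] [qy ay] zx zy D; split; first exact: quot_join qx qy D.
move=> [i [j [k /andP[ij /andP[jk /andP[r1 /andP[r2 /andP[r3 /andP[zki /andP[zij /eqP zik]]]]]]]]]].
have zik' : nat_of_ord (z i) = (z k).+1 := zik.
case: (D i k (ltn_trans ij jk) zki) => [[h|h]|[p [_ _ h1 h2]]].
- exact: core zx ax ij jk r1 r2 h zij zik'.
- exact: core zy ay ij jk r1 r2 h zij zik'.
- lia.
Qed.

Lemma P_one n (J : {set 'I_n.-1}) : S231 J 1%g.
Proof.
split.
  move=> k i j _ ei ej; rewrite !perm1.
  have e1 : nat_of_ord i = k := ei; have e2 : nat_of_ord j = k.+1 := ej; lia.
move=> [i [j [k /andP[ij /andP[jk /andP[_ /andP[_ /andP[_ /andP[zki _]]]]]]]]].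
move: zki; rewrite !perm1; lia.
Qed.

Lemma one_le n (w : 'S_n) : weak_le 1%g w.
Proof. apply/weak_leP => i j ij; rewrite !perm1; lia. Qed.

Lemma big_join n (J : {set 'I_n.-1}) (Q : 'S_n -> Prop) (s : seq 'S_n) :
  (forall w, Q w -> S231 J w) ->
  exists z, [/\ S231 J z, (forall w, w \in s -> Q w -> weak_le w z) &
    (forall u, (forall w, w \in s -> Q w -> weak_le w u) -> weak_le z u)].
Proof.
move=> QP; elim: s => [|a s [z' [Pz' ub' lub']]].
  exists 1%g; split => //; [exact: P_one | move=> u _; exact: one_le].
case: (classic (Q a)) => Qa; last first.
  exists z'; split => //.
    move=> w; rewrite inE => /orP[/eqP ->|ws] //; exact: ub'.
  move=> u H; apply: lub' => w ws; apply: H; by rewrite inE ws orbT.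
have [z [za zz lz D]] := join_ex a z'.
exists z; split.
- exact: P_join (QP _ Qa) Pz' za zz D.
- move=> w; rewrite inE => /orP[/eqP ->|ws] // Qw.
  exact: weak_le_trans (ub' w ws Qw) zz.
- move=> u H; apply: lz.
    by apply: H => //; rewrite inE eqxx.
  apply: lub' => w ws; apply: H; by rewrite inE ws orbT.
Qed.

Theorem proposition3p10 (n : nat) (J : {set 'I_n.-1}) :
  is_lattice (@S231 n J) (@weak_le n).
Proof.
move=> x y Px Py; split.
  have [z [zx zy lz D]] := join_ex x y.
  exists z; split => //; first exact: P_join Px Py zx zy D.
  by move=> u _; apply: lz.
have [z [Pz ub lub]] := @big_join n J (fun w => [/\ S231 J w, weak_le w x & weak_le w y])
  (enum 'S_n) (fun w => fun H => let: And3 a _ _ := H in a).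
exists z; split => //.
- by apply: lub => w _ [].
- by apply: lub => w _ [].
- by move=> u Pu ux uy; apply: ub; rewrite ?mem_enum.
Qed.
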